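(* Let $m\ge 2$ and consider actions $0,1,\dots,m$ and a random state $S\in\{A,A^c\}$ with $P(S=A)=P(S=A^c)=1/2$. In state $A$, action $0$ has deterministic cost $0$ and each action $j\ge1$ has cost distributed $\mathcal{N}(1,1)$; in state $A^c$, action $0$ has deterministic cost $1$ and each action $j\ge 1$ has cost distributed $\mathcal{N}(0,1)$. Given $S$, the training data consist of $m$ independent cost observations of each action (all independent), and $\hat{\mu}(j)$ denotes the empirical average cost of action $j$. The predicted cost minimization (PCM) rule selects $\arg\min_j\hat{\mu}(j)$; the uncertainty penalized (UP) rule with parameter $\lambda$ selects $\arg\min_j\hat{\mu}(j)+\lambda\sqrt{\sigma_j^2\ln m/m}$, where $\sigma_0^2=0$ and $\sigma_j^2=1$ for $j\ge1$. The regret of a rule is the true expected cost (in the realized state) of the selected action minus the minimal true expected cost in that state, and $\mathbb{E}R^{PCM},\mathbb{E}R^{UP}$ denote expected regrets over the training data and the state. If $\lambda\ge\sqrt{2}$, then $\mathbb{E}R^{UP}/\mathbb{E}R^{PCM}\to0$ as $m\to\infty$, i.e. $\mathbb{E}R^{UP}=o(\mathbb{E}R^{PCM})$.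
   Context: Ties in the argmin occur with probability zero and may be broken arbitrarily. The true expected cost of action $j\ge1$ is $1$ in state $A$ and $0$ in state $A^c$; that of action $0$ is $0$ in state $A$ and $1$ in state $A^c$. *)

(* Defs.v *)
From Stdlib Require Import Reals Lra.
Open Scope R_scope.

Fixpoint sumR (n : nat) (f : nat -> R) : R :=
  match n with O => 0 | S k => sumR k f + f k end.

Fixpoint min_upto (f : nat -> R) (n : nat) : R :=
  match n with O => f O | S k => Rmin (min_upto f k) (f (S k)) end.

(** An argmin of s over {0,...,n} (smallest minimizing index; ties have
    probability zero and may be broken arbitrarily). *)
Fixpoint argmin_upto (s : nat -> R) (n : nat) : nat :=
  match n with
  | O => O
  | S k => let i := argmin_upto s k in
           if Rlt_dec (s (S k)) (s i) then S k else i
  end.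

(** States: [true] = A, [false] = A^c. True expected cost of action j. *)
Definition mu (st : bool) (j : nat) : R :=
  if st then (match j with O => 0 | _ => 1 end)
  else (match j with O => 1 | _ => 0 end).

Definition phi (t : R) : R := exp (- (t * t) / 2) / sqrt (2 * PI).

Definition improper_int (f : R -> R) (l : R) : Prop :=
  forall eps, 0 < eps -> exists M, forall a b, a <= - M -> M <= b ->
    exists pr : Riemann_integrable f a b, Rabs (RiemannInt pr - l) < eps.

(** [gauss_exp n F v]: v is the expectation of F(X_0,...,X_{n-1}) where the
    X_i are i.i.d. standard normal (iterated improper integrals against the
    product Gaussian density). Coordinates >= n are irrelevant (set to 0). *)
Fixpoint gauss_exp (n : nat) (F : (nat -> R) -> R) (v : R) : Prop :=
  match n with
  | O => v = F (fun _ => 0)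
  | S k => exists g : R -> R,
      (forall t, gauss_exp k
         (fun x => F (fun i => match i with O => t | S i' => x i' end)) (g t))
      /\ improper_int (fun t => phi t * g t) v
  end.

(** Training data with sample size m: the noise vector x holds (m*m) i.i.d.
    N(0,1) variables; the k-th observation (k < m) of action j (1 <= j <= m)
    is  mu st j + x ((j-1)*m + k)  (cost ~ N(mu st j, 1)). *)
Definition muhat (m : nat) (st : bool) (x : nat -> R) (j : nat) : R :=
  match j with
  | O => mu st O
  | S j' => sumR m (fun k => mu st j + x (j' * m + k)%nat) / INR m
  end.

Definition sigma2 (j : nat) : R := match j with O => 0 | _ => 1 end.

Definition pen_PCM (m : nat) (j : nat) : R := 0.
Definition pen_UP (lam : R) (m : nat) (j : nat) : R :=
  lam * sqrt (sigma2 j * ln (INR m) / INR m).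

Definition select (pen : nat -> nat -> R) (m : nat) (st : bool) (x : nat -> R) : nat :=
  argmin_upto (fun j => muhat m st x j + pen m j) m.

Definition regret (pen : nat -> nat -> R) (m : nat) (st : bool) (x : nat -> R) : R :=
  mu st (select pen m st x) - min_upto (mu st) m.

Definition expected_regret (pen : nat -> nat -> R) (m : nat) (v : R) : Prop :=
  exists vA vAc,
    gauss_exp (m * m) (regret pen m true) vA /\
    gauss_exp (m * m) (regret pen m false) vAc /\
    v = / 2 * vA + / 2 * vAc.

(* Main.v *)
Require Import Defs.
From Stdlib Require Import Reals Lra Psatz Lia FunctionalExtensionality Classical_Prop.
From Coquelicot Require Import Coquelicot.
Open Scope R_scope.

Lemma sqrt2PI_pos : 0 < sqrt (2 * PI).
Proof. apply sqrt_lt_R0. generalize PI_RGT_0; lra. Qed.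

Lemma phi_pos t : 0 < phi t.
Proof. unfold phi. apply Rdiv_lt_0_compat. apply exp_pos. apply sqrt2PI_pos. Qed.

Lemma phi_cont t : continuity_pt phi t.
Proof.
  unfold phi. apply continuity_pt_div.
  - apply (continuity_pt_comp (fun t => - (t*t)/2) exp).
    + reg.
    + apply derivable_continuous_pt, derivable_pt_exp.
  - apply continuity_pt_const. intros x y; reflexivity.
  - generalize sqrt2PI_pos; lra.
Qed.

Lemma phi_sym t : phi (- t) = phi t.
Proof. unfold phi. replace (- t * - t) with (t * t) by ring. reflexivity. Qed.

Lemma ex_cont f a b : (forall x, continuity_pt f x) -> ex_RInt f a b.
Proof.
  intros H. apply (@ex_RInt_continuous R_CompleteNormedModule). intros z _.
  apply continuity_pt_filterlim. apply H.
Qed.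

Lemma cont_improper f l : (forall x, continuity_pt f x) ->
  (forall eps, 0 < eps -> exists M, forall a b, a <= - M -> M <= b ->
     Rabs (RInt f a b - l) < eps) -> improper_int f l.
Proof.
  intros Hc H eps Heps. destruct (H eps Heps) as [M HM].
  exists (Rmax M 0). intros a b Ha Hb.
  assert (Hab : a <= b). { generalize (Rmax_r M 0); lra. }
  exists (@continuity_implies_RiemannInt f a b Hab (fun x _ => Hc x)).
  rewrite <- RInt_Reals. apply HM.
  - generalize (Rmax_l M 0); lra.
  - generalize (Rmax_l M 0); lra.
Qed.

Lemma exp_le_mono x y : x <= y -> exp x <= exp y.
Proof. intros [H|H]. left; apply exp_increasing; auto. subst; lra. Qed.

Lemma phi_le t : phi t <= exp (/2 - t).
Proof.
  unfold phi.
  assert (H1 : 1 <= sqrt (2 * PI)).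
  { rewrite <- sqrt_1. apply sqrt_le_1_alt. generalize PI2_1; lra. }
  apply Rle_trans with (exp (- (t * t) / 2)).
  - unfold Rdiv at 1. rewrite <- (Rmult_1_r (exp (- (t*t)/2))) at 2.
    apply Rmult_le_compat_l. left; apply exp_pos.
    rewrite <- Rinv_1. apply Rinv_le_contravar; lra.
  - apply exp_le_mono. pose proof (Rle_0_sqr (t-1)) as Hs; unfold Rsqr in Hs; nra.
Qed.

Lemma G_bound b : 0 <= b -> RInt phi 0 b <= exp (/2).
Proof.
  intros Hb.
  assert (HI : is_RInt (fun t => exp (/2 - t)) 0 b
                 (minus ((fun t => - exp (/2 - t)) b) ((fun t => - exp (/2 - t)) 0))).
  { apply (is_RInt_derive (fun t => - exp (/2 - t))).
    - intros x _. auto_derive. auto. unfold Rminus. simpl. ring.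
    - intros x _. apply continuity_pt_filterlim.
      apply (continuity_pt_comp (fun t => /2 - t) exp). reg.
      apply derivable_continuous_pt, derivable_pt_exp. }
  apply Rle_trans with (RInt (fun t => exp (/2 - t)) 0 b).
  - apply RInt_le; auto.
    + apply ex_cont, phi_cont.
    + eexists; eauto.
    + intros x _; apply phi_le.
  - rewrite (is_RInt_unique _ _ _ _ HI). unfold minus, plus, opp; simpl.
    replace (/2 - 0) with (/2) by ring. generalize (exp_pos (/2 - b)); lra.
Qed.

Lemma RInt_phi_ge0 a b : a <= b -> 0 <= RInt phi a b.
Proof.
  intros H. apply RInt_ge_0; auto. apply ex_cont, phi_cont.
  intros; left; apply phi_pos.
Qed.

Lemma Gphi_mono b b' : b <= b' -> RInt phi 0 b <= RInt phi 0 b'.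
Proof.
  intros H. rewrite <- (RInt_Chasles phi 0 b b') by (apply ex_cont, phi_cont).
  unfold plus; simpl. generalize (RInt_phi_ge0 b b' H). lra.
Qed.

Lemma G_sym a : RInt phi a 0 = RInt phi 0 (- a).
Proof.
  assert (Hex : forall u v, ex_RInt phi u v) by (intros; apply ex_cont, phi_cont).
  assert (H := RInt_comp_lin phi (-1) 0 a 0 (Hex _ _)).
  replace (-1 * a + 0) with (-a) in H by ring.
  replace (-1 * 0 + 0) with 0 in H by ring.
  rewrite (RInt_ext _ (fun y => opp (phi y))) in H.
  2:{ intros x _. unfold scal, opp; simpl. unfold mult; simpl.
      replace (-1 * x + 0) with (- x) by ring. rewrite phi_sym. ring. }
  pose proof (@RInt_opp R_CompleteNormedModule phi a 0 (Hex _ _)) as E1.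
  pose proof (@opp_RInt_swap R_CompleteNormedModule phi 0 (-a) (Hex _ _)) as E2.
  unfold opp in *; simpl in *. lra.
Qed.

Definition Eset (y : R) : Prop := exists b, 0 <= b /\ y = RInt phi 0 b.

Lemma Eset_bound : bound Eset.
Proof. exists (exp (/2)). intros y [b [Hb ->]]. apply G_bound; auto. Qed.

Lemma Eset_ne : exists y, Eset y.
Proof. exists (RInt phi 0 0). exists 0. split; [lra|reflexivity]. Qed.

Definition Lsup : R := proj1_sig (completeness Eset Eset_bound Eset_ne).

Lemma Lsup_lub : is_lub Eset Lsup.
Proof. unfold Lsup. destruct (completeness Eset Eset_bound Eset_ne); auto. Qed.

Lemma Lsup_ub b : 0 <= b -> RInt phi 0 b <= Lsup.
Proof. intros Hb. apply (proj1 Lsup_lub). exists b; auto. Qed.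

Lemma Lsup_approx eps : 0 < eps -> exists b0, 0 <= b0 /\ Lsup - eps < RInt phi 0 b0.
Proof.
  intros He. destruct (Classical_Prop.classic (exists b0, 0 <= b0 /\ Lsup - eps < RInt phi 0 b0)) as [H|H]; auto.
  exfalso. assert (Lsup <= Lsup - eps).
  { apply (proj2 Lsup_lub). intros y [b [Hb ->]].
    destruct (Rle_dec (RInt phi 0 b) (Lsup - eps)) as [h|h]; auto.
    exfalso; apply H; exists b; split; auto; lra. }
  lra.
Qed.

Definition Cg : R := 2 * Lsup.

Lemma Cg_pos : 0 < Cg.
Proof.
  unfold Cg. assert (H : 0 < RInt phi 0 1).
  { apply Rlt_le_trans with (RInt (fun _ => exp (- / 2) / sqrt (2 * PI)) 0 1).
    - rewrite RInt_const. unfold scal; simpl; unfold mult; simpl.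
      replace (1 - 0) with 1 by ring. rewrite Rmult_1_l.
      apply Rdiv_lt_0_compat. apply exp_pos. apply sqrt2PI_pos.
    - apply RInt_le. lra. apply ex_RInt_const. apply ex_cont, phi_cont.
      intros x Hx. unfold phi. unfold Rdiv. apply Rmult_le_compat_r.
      left; apply Rinv_0_lt_compat, sqrt2PI_pos.
      apply exp_le_mono. nra. }
  generalize (Lsup_ub 1 ltac:(lra)); lra.
Qed.

Lemma phi_lim eps : 0 < eps -> exists M, forall a b, a <= - M -> M <= b ->
   Rabs (RInt phi a b - Cg) < eps.
Proof.
  intros He. destruct (Lsup_approx (eps/2) ltac:(lra)) as [b0 [Hb0 Hl]].
  exists b0. intros a b Ha Hb.
  rewrite <- (RInt_Chasles phi a 0 b) by (apply ex_cont, phi_cont).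
  unfold plus; simpl. rewrite G_sym.
  assert (H1 := Gphi_mono b0 (-a) ltac:(lra)).
  assert (H2 := Gphi_mono b0 b ltac:(lra)).
  assert (H3 := Lsup_ub (-a) ltac:(lra)).
  assert (H4 := Lsup_ub b ltac:(lra)).
  unfold Cg. apply Rabs_def1; lra.
Qed.

Lemma core K d s : improper_int (fun t => phi t * (K * exp (d + s * t)))
                                (K * Cg * exp (d + s * s / 2)).
Proof.
  set (A := K * exp (d + s * s / 2)).
  apply cont_improper.
  - intros x. apply continuity_pt_mult. apply phi_cont.
    apply continuity_pt_mult. apply continuity_pt_const; intros u v; reflexivity.
    apply (continuity_pt_comp (fun t => d + s * t) exp). reg.
    apply derivable_continuous_pt, derivable_pt_exp.
  - intros eps He.
    assert (HA : 0 < Rabs A + 1) by (generalize (Rabs_pos A); lra).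
    destruct (phi_lim (eps / (Rabs A + 1)) ltac:(apply Rdiv_lt_0_compat; lra)) as [M HM].
    exists (M + Rabs s). intros a b Ha Hb.
    assert (E : RInt (fun t => phi t * (K * exp (d + s * t))) a b
                = A * RInt phi (1 * a + - s) (1 * b + - s)).
    { rewrite <- RInt_comp_lin by (apply ex_cont, phi_cont).
      rewrite <- (RInt_scal (fun y => scal 1 (phi (1 * y + - s)))).
      2:{ apply (ex_RInt_comp_lin phi 1 (-s)). apply ex_cont, phi_cont. }
      apply RInt_ext. intros x _. unfold scal; simpl; unfold mult; simpl.
      unfold A, phi. rewrite Rmult_1_l.
      replace (1 * x + - s) with (x - s) by ring.
      assert (Ee : exp (- (x * x) / 2) * exp (d + s * x) =
                   exp (d + s * s / 2) * exp (- ((x - s) * (x - s)) / 2)).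
      { rewrite <- !exp_plus. f_equal. field. }
      unfold Rdiv. 
      replace (exp (- (x * x) * / 2) * / sqrt (2 * PI) * (K * exp (d + s * x)))
        with (K * (exp (- (x * x) / 2) * exp (d + s * x)) * / sqrt (2 * PI)) by (unfold Rdiv; ring).
      rewrite Ee. unfold Rdiv. ring. }
    rewrite E.
    replace (A * RInt phi (1 * a + - s) (1 * b + - s) - K * Cg * exp (d + s * s / 2))
      with (A * (RInt phi (1 * a + - s) (1 * b + - s) - Cg)) by (unfold A; ring).
    rewrite Rabs_mult.
    assert (Hl : Rabs (RInt phi (1 * a + - s) (1 * b + - s) - Cg) < eps / (Rabs A + 1)).
    { apply HM.
      - generalize (Rle_abs (-s)); rewrite Rabs_Ropp. lra.
      - generalize (Rle_abs s). lra. }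
    apply Rle_lt_trans with (Rabs A * (eps / (Rabs A + 1))).
    + apply Rmult_le_compat_l. apply Rabs_pos. lra.
    + apply Rlt_le_trans with ((Rabs A + 1) * (eps / (Rabs A + 1))).
      * apply Rmult_lt_compat_r. apply Rdiv_lt_0_compat; lra. lra.
      * right. field. lra.
Qed.

Lemma improper_mono f g l l' : (forall t, f t <= g t) ->
  improper_int f l -> improper_int g l' -> l <= l'.
Proof.
  intros Hfg Hf Hg. destruct (Rle_dec l l') as [h|h]; auto. exfalso.
  set (e := (l - l') / 2).
  destruct (Hf e ltac:(unfold e; lra)) as [M1 H1].
  destruct (Hg e ltac:(unfold e; lra)) as [M2 H2].
  set (M := Rabs M1 + Rabs M2).
  assert (HM1 := Rle_abs M1). assert (HM2 := Rle_abs M2).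
  assert (HM1' := Rabs_pos M1). assert (HM2' := Rabs_pos M2).
  destruct (H1 (-M) M ltac:(unfold M; lra) ltac:(unfold M; lra)) as [pr1 Hp1].
  destruct (H2 (-M) M ltac:(unfold M; lra) ltac:(unfold M; lra)) as [pr2 Hp2].
  assert (Hle := RiemannInt_P19 pr1 pr2 ltac:(unfold M; lra) (fun x _ => Hfg x)).
  apply Rabs_def2 in Hp1. apply Rabs_def2 in Hp2. unfold e in *. lra.
Qed.

Lemma improper_lin f g l l' c : improper_int f l -> improper_int g l' ->
  improper_int (fun x => f x + c * g x) (l + c * l').
Proof.
  intros Hf Hg eps He.
  assert (Hc : 0 < Rabs c + 1) by (generalize (Rabs_pos c); lra).
  destruct (Hf (eps/2) ltac:(lra)) as [M1 H1].
  destruct (Hg (eps/2/(Rabs c + 1)) ltac:(apply Rdiv_lt_0_compat; lra)) as [M2 H2].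
  exists (Rabs M1 + Rabs M2). intros a b Ha Hb.
  assert (HM1 := Rle_abs M1). assert (HM2 := Rle_abs M2).
  assert (HM1' := Rabs_pos M1). assert (HM2' := Rabs_pos M2).
  destruct (H1 a b ltac:(lra) ltac:(lra)) as [pr1 Hp1].
  destruct (H2 a b ltac:(lra) ltac:(lra)) as [pr2 Hp2].
  exists (RiemannInt_P10 c pr1 pr2).
  rewrite (RiemannInt_P13 pr1 pr2).
  replace (RiemannInt pr1 + c * RiemannInt pr2 - (l + c * l'))
    with ((RiemannInt pr1 - l) + c * (RiemannInt pr2 - l')) by ring.
  eapply Rle_lt_trans. apply Rabs_triang. rewrite Rabs_mult.
  assert (Rabs c * Rabs (RiemannInt pr2 - l') <= (Rabs c + 1) * (eps / 2 / (Rabs c + 1))).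
  { apply Rmult_le_compat. apply Rabs_pos. apply Rabs_pos. lra. lra. }
  replace ((Rabs c + 1) * (eps / 2 / (Rabs c + 1))) with (eps/2) in H by (field; lra).
  lra.
Qed.

Lemma G_ext n F G v : (forall x, F x = G x) -> gauss_exp n F v -> gauss_exp n G v.
Proof.
  intros H. replace G with F; auto. apply functional_extensionality; auto.
Qed.

Lemma G_mono n : forall F G v w, (forall x, F x <= G x) ->
  gauss_exp n F v -> gauss_exp n G w -> v <= w.
Proof.
  induction n as [|k IH]; simpl; intros F G v w HFG HF HG.
  - subst; auto.
  - destruct HF as [gF [HF1 HF2]]. destruct HG as [gG [HG1 HG2]].
    apply (improper_mono _ _ _ _ (fun t => Rmult_le_compat_l _ _ _ (Rlt_le _ _ (phi_pos t))
             (IH _ _ _ _ (fun x => HFG _) (HF1 t) (HG1 t))) HF2 HG2).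
Qed.

Lemma G_lin n : forall F G v w c, gauss_exp n F v -> gauss_exp n G w ->
  gauss_exp n (fun x => F x + c * G x) (v + c * w).
Proof.
  induction n as [|k IH]; simpl; intros F G v w c HF HG.
  - subst; auto.
  - destruct HF as [gF [HF1 HF2]]. destruct HG as [gG [HG1 HG2]].
    exists (fun t => gF t + c * gG t). split.
    + intros t. apply IH; auto.
    + replace (fun t => phi t * (gF t + c * gG t)) with
        (fun t => phi t * gF t + c * (phi t * gG t)).
      apply improper_lin; auto.
      apply functional_extensionality; intros; ring.
Qed.

Lemma sumR_shift n f : sumR (S n) f = f O + sumR n (fun i => f (S i)).
Proof.
  induction n as [|n IH]; simpl in *. ring.
  rewrite IH. ring.
Qed.

Lemma G_explin n : forall (a : nat -> R) c,
  gauss_exp n (fun x => exp (c + sumR n (fun i => a i * x i)))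
              (Cg ^ n * exp (c + sumR n (fun i => a i * a i / 2))).
Proof.
  induction n as [|k IH]; simpl; intros a c.
  - ring_simplify (c + 0). ring.
  - exists (fun t => Cg ^ k * exp ((c + a O * t) + sumR k (fun i => a (S i) * a (S i) / 2))).
    split.
    + intros t. eapply G_ext.
      2:{ exact (IH (fun i => a (S i)) (c + a O * t)). }
      intros x. cbv beta. f_equal.
      pose proof (sumR_shift k (fun i => a i * (match i with O => t | S i' => x i' end))) as E.
      simpl in E. rewrite E. ring.
    + replace (fun t => phi t * (Cg ^ k * exp ((c + a O * t) + sumR k (fun i => a (S i) * a (S i) / 2))))
        with (fun t => phi t * (Cg ^ k * exp ((c + sumR k (fun i => a (S i) * a (S i) / 2)) + a O * t))).
      2:{ apply functional_extensionality; intros t. f_equal. f_equal. f_equal. ring. }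
      replace (Cg * Cg ^ k * exp (c + (sumR k (fun i => a i * a i / 2) + a k * a k / 2)))
        with (Cg ^ k * Cg * exp ((c + sumR k (fun i => a (S i) * a (S i) / 2)) + a O * a O / 2)).
      apply core.
      assert (E := sumR_shift k (fun i => a i * a i / 2)). simpl in E. rewrite E.
      replace (c + sumR k (fun i => a (S i) * a (S i) / 2) + a O * a O / 2) with
        (c + (a O * a O / 2 + sumR k (fun i => a (S i) * a (S i) / 2))) by ring.
      ring.
Qed.

Lemma sumR_ext n f g : (forall i, (i < n)%nat -> f i = g i) -> sumR n f = sumR n g.
Proof.
  induction n as [|n IH]; simpl; intros H; auto.
  rewrite IH by (intros; apply H; lia). rewrite H by lia. reflexivity.
Qed.

Lemma sumR_add n1 n2 f : sumR (n1 + n2) f = sumR n1 f + sumR n2 (fun k => f (n1 + k)%nat).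
Proof.
  induction n2 as [|n2 IH]; simpl.
  - rewrite Nat.add_0_r. ring.
  - rewrite Nat.add_succ_r. simpl. rewrite IH. ring.
Qed.

Lemma sumR_const n c : sumR n (fun _ => c) = INR n * c.
Proof.
  induction n as [|n IH]. simpl; ring.
  change (sumR (S n) (fun _ => c)) with (sumR n (fun _ => c) + c). rewrite IH, S_INR. ring.
Qed.

Lemma sumR_plus n f g : sumR n (fun i => f i + g i) = sumR n f + sumR n g.
Proof. induction n as [|n IH]; simpl. ring. rewrite IH. ring. Qed.

Lemma sumR_scal n c f : sumR n (fun i => c * f i) = c * sumR n f.
Proof. induction n as [|n IH]; simpl. ring. rewrite IH. ring. Qed.

Lemma sumR_ge_term J f j : (forall i, (i < J)%nat -> 0 <= f i) -> (j < J)%nat -> f j <= sumR J f.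
Proof.
  induction J as [|J IH]; simpl; intros H Hj. lia.
  destruct (Nat.eq_dec j J) as [->|Hne].
  - assert (0 <= sumR J f).
    { clear IH Hj. induction J as [|J IH']; simpl. lra.
      assert (0 <= f J) by (apply H; lia). assert (0 <= sumR J f) by (apply IH'; intros; apply H; lia). lra. }
    lra.
  - assert (f j <= sumR J f) by (apply IH; [intros; apply H; lia|lia]).
    assert (0 <= f J) by (apply H; lia). lra.
Qed.

Definition ind (p q i : nat) : R := if andb (Nat.leb p i) (Nat.ltb i (p + q)) then 1 else 0.

Lemma sumR_ind N p q y : (p + q <= N)%nat ->
  sumR N (fun i => ind p q i * y i) = sumR q (fun k => y (p + k)%nat).
Proof.
  intros H. replace N with (p + (q + (N - p - q)))%nat by lia.
  rewrite !sumR_add.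
  rewrite (sumR_ext p _ (fun _ => 0)).
  2:{ intros i Hi. unfold ind. replace (Nat.leb p i) with false. simpl; ring.
      symmetry; apply Nat.leb_gt; lia. }
  rewrite (sumR_ext q _ (fun k => y (p + k)%nat)).
  2:{ intros i Hi. unfold ind. replace (Nat.leb p (p+i)) with true by (symmetry; apply Nat.leb_le; lia).
      replace (Nat.ltb (p+i) (p+q)) with true by (symmetry; apply Nat.ltb_lt; lia). simpl; ring. }
  rewrite (sumR_ext (N - p - q) _ (fun _ => 0)).
  2:{ intros i Hi. unfold ind. replace (Nat.ltb (p + (q + i)) (p+q)) with false.
      rewrite Bool.andb_false_r. ring. symmetry; apply Nat.ltb_ge; lia. }
  rewrite !sumR_const. ring.
Qed.

Lemma G_block N p q c c0 : (p + q <= N)%nat ->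
  gauss_exp N (fun x => exp (c + c0 * sumR q (fun k => x (p + k)%nat)))
              (Cg ^ N * exp (c + INR q * (c0 * c0 / 2))).
Proof.
  intros H. assert (G := G_explin N (fun i => c0 * ind p q i) c).
  eapply G_ext in G.
  - replace (Cg ^ N * exp (c + INR q * (c0 * c0 / 2))) with
      (Cg ^ N * exp (c + sumR N (fun i => c0 * ind p q i * (c0 * ind p q i) / 2))).
    exact G.
    f_equal. f_equal. f_equal.
    rewrite (sumR_ext N _ (fun i => ind p q i * (c0 * c0 / 2))).
    rewrite sumR_ind by auto. apply sumR_const.
    intros i _. unfold ind. destruct (andb _ _); field.
  - intros x. cbv beta. f_equal. f_equal.
    rewrite <- sumR_ind with (N := N) by auto. rewrite <- sumR_scal.
    apply sumR_ext. intros; ring.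
Qed.

Lemma G_val n F v w : gauss_exp n F v -> v = w -> gauss_exp n F w.
Proof. intros H ->; auto. Qed.

Lemma G_zero N : gauss_exp N (fun _ => 0) 0.
Proof.
  assert (G := G_lin N _ _ _ _ (-1) (G_block N 0 0 0 0 ltac:(lia)) (G_block N 0 0 0 0 ltac:(lia))).
  eapply G_val. eapply G_ext. 2: exact G. intros x; cbv beta; ring. ring.
Qed.

Lemma G_sum n J : forall (F : nat -> (nat -> R) -> R) (v : nat -> R),
  (forall j, (j < J)%nat -> gauss_exp n (F j) (v j)) ->
  gauss_exp n (fun x => sumR J (fun j => F j x)) (sumR J v).
Proof.
  induction J as [|J IH]; simpl; intros F v H.
  - apply G_zero.
  - assert (G := G_lin n _ _ _ _ 1 (IH F v (fun j Hj => H j ltac:(lia))) (H J ltac:(lia))).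
    eapply G_val. eapply G_ext. 2: exact G. intros x; cbv beta; ring. ring.
Qed.

Lemma argmin_le s n : (argmin_upto s n <= n)%nat.
Proof.
  induction n as [|n IH]; simpl. lia.
  destruct (Rlt_dec _ _); lia.
Qed.

Lemma argmin_min s n j : (j <= n)%nat -> s (argmin_upto s n) <= s j.
Proof.
  induction n as [|n IH]; simpl; intros Hj.
  - replace j with O by lia. lra.
  - destruct (Rlt_dec (s (S n)) (s (argmin_upto s n))) as [h|h].
    + destruct (Nat.eq_dec j (S n)) as [->|Hne]. lra.
      assert (s (argmin_upto s n) <= s j) by (apply IH; lia). lra.
    + destruct (Nat.eq_dec j (S n)) as [->|Hne]. lra.
      apply IH; lia.
Qed.

Lemma min_upto_le f n j : (j <= n)%nat -> min_upto f n <= f j.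
Proof.
  induction n as [|n IH]; simpl; intros Hj.
  - replace j with O by lia. lra.
  - destruct (Nat.eq_dec j (S n)) as [->|Hne]. apply Rmin_r.
    eapply Rle_trans. apply Rmin_l. apply IH; lia.
Qed.

Lemma min_upto_ge f n c : (forall j, c <= f j) -> c <= min_upto f n.
Proof.
  intros H. induction n as [|n IH]; simpl. apply H.
  apply Rmin_glb; auto.
Qed.

Lemma mu_01 st j : 0 <= mu st j <= 1.
Proof. destruct st, j; simpl; lra. Qed.

Lemma min_mu st m : (1 <= m)%nat -> min_upto (mu st) m = 0.
Proof.
  intros Hm. apply Rle_antisym.
  - destruct st.
    + apply (min_upto_le (mu true) m O). lia.
    + apply (min_upto_le (mu false) m 1). lia.
  - apply min_upto_ge. intros j; apply mu_01.
Qed.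

Lemma muhat_S m st x j : (0 < m)%nat ->
  muhat m st x (S j) = mu st (S j) + sumR m (fun k => x (j*m+k)%nat) / INR m.
Proof.
  intros Hm. unfold muhat. rewrite sumR_plus, sumR_const.
  assert (0 < INR m) by (apply lt_0_INR; lia). field. lra.
Qed.

Lemma regret_ge0 pen m st x : (1 <= m)%nat -> 0 <= regret pen m st x.
Proof. intros Hm. unfold regret. rewrite min_mu by auto. generalize (mu_01 st (select pen m st x)); lra. Qed.

Lemma pen_UP_0 lam m : pen_UP lam m O = 0.
Proof. unfold pen_UP, sigma2. rewrite Rmult_0_l. unfold Rdiv. rewrite Rmult_0_l, sqrt_0. ring. Qed.

Lemma pen_UP_S lam m j : pen_UP lam m (S j) = lam * sqrt (1 * ln (INR m) / INR m).
Proof. reflexivity. Qed.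

Lemma one_le_exp y : 0 <= y -> 1 <= exp y.
Proof. intros H. generalize (exp_ineq1_le y). lra. Qed.

Lemma sumR_nonneg n f : (forall i, (i < n)%nat -> 0 <= f i) -> 0 <= sumR n f.
Proof.
  induction n as [|n IH]; simpl; intros H. lra.
  assert (0 <= f n) by (apply H; lia). assert (0 <= sumR n f) by (apply IH; intros; apply H; lia). lra.
Qed.

Lemma Sdiv_id (S y m : R) : 0 < m -> y = S / m -> S = m * y.
Proof. intros Hm ->. field. lra. Qed.

Lemma regret_UP_A lam m x : (2 <= m)%nat ->
  regret (pen_UP lam) m true x <=
  sumR m (fun j => exp (- INR m * (1 + lam * sqrt (1 * ln (INR m) / INR m))
                        + (-1) * sumR m (fun k => x (j*m + k)%nat))).
Proof.
  intros Hm. set (P := lam * sqrt (1 * ln (INR m) / INR m)).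
  assert (Hpos : forall j, (j < m)%nat -> 0 <= exp (- INR m * (1 + P) + (-1) * sumR m (fun k => x (j*m + k)%nat)))
    by (intros; left; apply exp_pos).
  assert (Hm0 : 0 < INR m) by (apply lt_0_INR; lia).
  unfold regret, select. rewrite min_mu by lia.
  set (s := fun j => muhat m true x j + pen_UP lam m j).
  assert (Hle := argmin_le s m). assert (Hmin := argmin_min s m O ltac:(lia)).
  destruct (argmin_upto s m) as [|j] eqn:Ei.
  - simpl. rewrite Rminus_0_r. apply sumR_nonneg. auto.
  - simpl. rewrite Rminus_0_r.
    eapply Rle_trans. 2: apply (sumR_ge_term m _ j Hpos ltac:(lia)).
    apply one_le_exp. unfold s in Hmin. rewrite muhat_S, pen_UP_S, pen_UP_0 in Hmin by lia.
    simpl in Hmin. fold P in Hmin.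
    set (Sj := sumR m (fun k => x (j*m + k)%nat)) in *.
    set (y := Sj / INR m) in *.
    assert (E := Sdiv_id Sj y (INR m) Hm0 eq_refl). rewrite E. nra.
Qed.

Lemma regret_UP_Ac lam m x : (2 <= m)%nat ->
  regret (pen_UP lam) m false x <=
  exp (- INR m * (1 - lam * sqrt (1 * ln (INR m) / INR m))
       + /2 * sumR (2 * m) (fun k => x (0 + k)%nat)).
Proof.
  intros Hm. set (P := lam * sqrt (1 * ln (INR m) / INR m)).
  assert (Hm0 : 0 < INR m) by (apply lt_0_INR; lia).
  unfold regret, select. rewrite min_mu by lia.
  set (s := fun j => muhat m false x j + pen_UP lam m j).
  assert (H1 := argmin_min s m 1 ltac:(lia)).
  assert (H2 := argmin_min s m 2 ltac:(lia)).
  destruct (argmin_upto s m) as [|j] eqn:Ei.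
  - simpl. rewrite Rminus_0_r. apply one_le_exp.
    unfold s in H1, H2. rewrite muhat_S, pen_UP_S, pen_UP_0 in H1, H2 by lia.
    simpl in H1, H2. fold P in H1, H2.
    replace (2 * m)%nat with (m + m)%nat by lia. rewrite sumR_add.
    simpl. rewrite !Nat.add_0_r in *.
    set (S0 := sumR m (fun k => x k)) in *.
    set (S1 := sumR m (fun k => x (m + k)%nat)) in *.
    set (y0 := S0 / INR m) in *. set (y1 := S1 / INR m) in *.
    assert (E0 := Sdiv_id S0 y0 (INR m) Hm0 eq_refl).
    assert (E1 := Sdiv_id S1 y1 (INR m) Hm0 eq_refl).
    rewrite E0, E1. nra.
  - simpl. rewrite Rminus_0_r. left; apply exp_pos.
Qed.

Definition fPCM (m : nat) (x : nat -> R) : R :=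
  let r := sqrt (INR m) in
  let th := 1 + 2 / r in let de := 1 / r in let K := 4 * r + 8 in
  let S := sumR m (fun k => x (0 + k)%nat) in
  (exp (- K - th * INR m + (- th) * S) + (-1) * exp (- K - (th - de) * INR m + (- (th - de)) * S))
  + (-1) * exp (- K - 4 - (th + de) * INR m + (- (th + de)) * S).

Lemma regret_PCM_A m x : (2 <= m)%nat -> fPCM m x <= regret pen_PCM m true x.
Proof.
  intros Hm. assert (Hm0 : 0 < INR m) by (apply lt_0_INR; lia).
  unfold fPCM. set (r := sqrt (INR m)).
  assert (Hr : 0 < r) by (apply sqrt_lt_R0; auto).
  set (th := 1 + 2 / r). set (de := 1 / r). set (K := 4 * r + 8).
  assert (Hth : th * r = r + 2) by (unfold th; field; lra).
  assert (Hde : de * r = 1) by (unfold de; field; lra).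
  assert (Hde0 : 0 < de) by (unfold de; apply Rdiv_lt_0_compat; lra).
  assert (Hth0 : 0 < th) by (unfold th; assert (0 < 2 / r) by (apply Rdiv_lt_0_compat; lra); lra).
  simpl (sumR m (fun k => x (0 + k)%nat)).
  set (S := sumR m (fun k => x k)).
  assert (Hreg := regret_ge0 pen_PCM m true x ltac:(lia)).
  assert (E3 := exp_pos (- K - 4 - (th + de) * INR m + - (th + de) * S)).
  assert (E2 := exp_pos (- K - (th - de) * INR m + - (th - de) * S)).
  destruct (Rle_dec (- INR m) S) as [HS|HS].
  - assert (exp (- K - th * INR m + - th * S) <= exp (- K - (th - de) * INR m + - (th - de) * S)).
    { apply exp_le_mono. nra. }
    lra.
  - assert (Hreg1 : regret pen_PCM m true x = 1).
    { unfold regret, select. rewrite min_mu by lia.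
      set (s := fun j => muhat m true x j + pen_PCM m j).
      assert (H1 := argmin_min s m 1 ltac:(lia)).
      destruct (argmin_upto s m) as [|j] eqn:Ei.
      - exfalso. unfold s, pen_PCM in H1. rewrite muhat_S in H1 by lia. simpl in H1.
        fold S in H1. set (y := S / INR m) in *.
        assert (E := Sdiv_id S y (INR m) Hm0 eq_refl). nra.
      - simpl. ring. }
    rewrite Hreg1.
    destruct (Rle_dec 4 (de * (- (S + INR m)))) as [Hu|Hu].
    + assert (exp (- K - th * INR m + - th * S) <= exp (- K - 4 - (th + de) * INR m + - (th + de) * S)).
      { apply exp_le_mono. nra. }
      lra.
    + assert (Hu4 : - (S + INR m) < 4 * r).
      { assert (- (S + INR m) = r * (de * (- (S + INR m)))) by (rewrite <- Rmult_assoc, (Rmult_comm r de), Hde; ring).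
        nra. }
      assert (exp (- K - th * INR m + - th * S) <= 1).
      { rewrite <- exp_0. apply exp_le_mono. unfold K. nra. }
      lra.
Qed.

Lemma UP_A_bound lam m v : (2 <= m)%nat ->
  gauss_exp (m * m) (regret (pen_UP lam) m true) v ->
  v <= Cg ^ (m * m) * (INR m * exp (- INR m * (1 + lam * sqrt (1 * ln (INR m) / INR m)) + INR m * / 2)).
Proof.
  intros Hm Hv.
  set (c := - INR m * (1 + lam * sqrt (1 * ln (INR m) / INR m))).
  assert (G := G_sum (m * m) m (fun j x => exp (c + (-1) * sumR m (fun k => x (j*m + k)%nat)))
                 (fun j => Cg ^ (m*m) * exp (c + INR m * (-1 * -1 / 2)))
                 (fun j Hj => G_block (m*m) (j*m) m c (-1) ltac:(nia))).
  eapply Rle_trans. apply (G_mono _ _ _ _ _ (fun x => regret_UP_A lam m x Hm) Hv G).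
  rewrite sumR_const. right. replace (-1 * -1 / 2) with (/2) by field. ring.
Qed.

Lemma UP_Ac_bound lam m v : (2 <= m)%nat ->
  gauss_exp (m * m) (regret (pen_UP lam) m false) v ->
  v <= Cg ^ (m * m) * exp (- INR m * (1 - lam * sqrt (1 * ln (INR m) / INR m)) + INR m * / 4).
Proof.
  intros Hm Hv.
  set (c := - INR m * (1 - lam * sqrt (1 * ln (INR m) / INR m))).
  assert (G := G_block (m*m) 0 (2*m) c (/2) ltac:(nia)).
  eapply Rle_trans. apply (G_mono _ _ _ _ _ (fun x => regret_UP_Ac lam m x Hm) Hv G).
  right. f_equal. f_equal. rewrite mult_INR. simpl (INR 2). field.
Qed.

Lemma nonneg_bound pen m st v : (2 <= m)%nat ->
  gauss_exp (m * m) (regret pen m st) v -> 0 <= v.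
Proof.
  intros Hm Hv. apply (G_mono _ _ _ _ _ (fun x => regret_ge0 pen m st x ltac:(lia)) (G_zero _) Hv).
Qed.

Lemma PCM_A_bound m v : (2 <= m)%nat ->
  gauss_exp (m * m) (regret pen_PCM m true) v ->
  Cg ^ (m * m) * (exp (- (4 * sqrt (INR m) + 8) - INR m / 2) * (exp 2 - 2 * exp (/2))) <= v.
Proof.
  intros Hm Hv. assert (Hm0 : 0 < INR m) by (apply lt_0_INR; lia).
  set (r := sqrt (INR m)).
  assert (Hr : 0 < r) by (apply sqrt_lt_R0; auto).
  assert (Hrr : r * r = INR m) by (apply sqrt_sqrt; lra).
  set (th := 1 + 2 / r). set (de := 1 / r). set (K := 4 * r + 8).
  assert (G1 := G_block (m*m) 0 m (- K - th * INR m) (- th) ltac:(nia)).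
  assert (G2 := G_block (m*m) 0 m (- K - (th - de) * INR m) (- (th - de)) ltac:(nia)).
  assert (G3 := G_block (m*m) 0 m (- K - 4 - (th + de) * INR m) (- (th + de)) ltac:(nia)).
  assert (G := G_lin _ _ _ _ _ (-1) (G_lin _ _ _ _ _ (-1) G1 G2) G3).
  assert (G' : gauss_exp (m * m) (fPCM m) 
     ((Cg ^ (m * m) * exp (- K - th * INR m + INR m * (- th * - th / 2)) +
       -1 * Cg ^ (m * m) * exp (- K - (th - de) * INR m + INR m * (- (th - de) * - (th - de) / 2))) +
       -1 * (Cg ^ (m * m) * exp (- K - 4 - (th + de) * INR m + INR m * (- (th + de) * - (th + de) / 2))))).
  { eapply G_val. eapply G_ext. 2: exact G. intros x. reflexivity. ring. }
  eapply Rle_trans. 2: apply (G_mono _ _ _ _ _ (fun x => regret_PCM_A m x Hm) G' Hv).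
  right.
  replace (- K - th * INR m + INR m * (- th * - th / 2)) with (- K - INR m / 2 + 2)
    by (unfold th; rewrite <- Hrr; field; lra).
  replace (- K - (th - de) * INR m + INR m * (- (th - de) * - (th - de) / 2)) with (- K - INR m / 2 + /2)
    by (unfold th, de; rewrite <- Hrr; field; lra).
  replace (- K - 4 - (th + de) * INR m + INR m * (- (th + de) * - (th + de) / 2)) with (- K - INR m / 2 + /2)
    by (unfold th, de; rewrite <- Hrr; field; lra).
  rewrite !exp_plus. unfold K. ring.
Qed.

Lemma sqrt2_ge : 1.4 <= sqrt 2.
Proof.
  destruct (Rle_dec 1.4 (sqrt 2)) as [h|h]; auto. exfalso.
  assert (H := sqrt_sqrt 2 ltac:(lra)). assert (H0 := sqrt_pos 2). nra.
Qed.

Lemma sq_le_exp r : 0 <= r -> r * r <= 4 * exp r.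
Proof.
  intros Hr. assert (H := exp_ineq1_le (r/2)).
  replace r with (r/2 + r/2) at 3 by field. rewrite exp_plus. nra.
Qed.

Lemma asym_core lam r q L : sqrt 2 <= lam -> 71 <= r -> 128 * lam * lam <= r -> 0 <= q ->
  q * q * (r * r) = 2 * L -> 25 <= L -> L <= r ->
  r * r * exp (4 * r + 8 - r * r * (lam * q)) + exp (4 * r + 8 + r * r * (lam * q) - r * r / 4)
  <= 5 * exp (8 - r).
Proof.
  intros Hl Hr1 Hr2 Hq HqL HL1 HL2.
  assert (Hl14 := sqrt2_ge).
  set (mq := r * r * q).
  assert (Hmq0 : 0 <= mq) by (unfold mq; apply Rmult_le_pos; nra).
  assert (Hmq2 : mq * mq = r * r * (2 * L)) by (unfold mq; rewrite <- HqL; ring).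
  assert (Hmq : 7 * r <= mq) by nra.
  set (A := r * r * (lam * q)).
  assert (HA : A = lam * mq) by (unfold A, mq; ring).
  assert (HA1 : 9.8 * r <= A) by nra.
  assert (HA0 : 0 <= A) by nra.
  assert (HA2 : A * A <= r * r * r * r / 64).
  { rewrite HA. replace (lam * mq * (lam * mq)) with (lam * lam * (mq * mq)) by ring.
    rewrite Hmq2. assert (0 <= lam * lam) by nra.
    assert (h1 : lam * lam <= r / 128) by lra.
    assert (h2 : r * r * (2 * L) <= 2 * r * r * r) by nra.
    assert (h3 : 0 <= r * r * (2 * L)) by nra.
    apply Rle_trans with ((r / 128) * (2 * r * r * r)).
    apply Rmult_le_compat; lra. right; field. }
  assert (HA3 : A <= r * r / 8).
  { destruct (Rle_dec A (r*r/8)) as [h|h]; auto. exfalso.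
    assert (h' : r*r/8 < A) by lra. assert (0 <= r*r/8) by nra.
    assert ((r*r/8)*(r*r/8) < A*A) by (apply Rmult_le_0_lt_compat; lra). lra. }
  assert (T1 : r * r * exp (4 * r + 8 - A) <= 4 * exp (8 - r)).
  { eapply Rle_trans. apply Rmult_le_compat_r. left; apply exp_pos. apply sq_le_exp; lra.
    rewrite Rmult_assoc, <- exp_plus. apply Rmult_le_compat_l. lra. apply exp_le_mono. lra. }
  assert (T2 : exp (4 * r + 8 + A - r * r / 4) <= exp (8 - r)).
  { apply exp_le_mono. nra. }
  lra.
Qed.

Lemma c0_pos : 0 < exp 2 - 2 * exp (/2).
Proof.
  replace 2 with (/2 + 3/2) at 1 by field. rewrite exp_plus.
  assert (H := exp_ineq1_le (3/2)). assert (H2 := exp_pos (/2)). nra.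
Qed.

Theorem mainTheorem5 (lam : R) (hlam : sqrt 2 <= lam)
  (ERUP ERPCM : nat -> R)
  (hUP : forall m : nat, (2 <= m)%nat -> expected_regret (pen_UP lam) m (ERUP m))
  (hPCM : forall m : nat, (2 <= m)%nat -> expected_regret pen_PCM m (ERPCM m)) :
  Un_cv (fun m => ERUP m / ERPCM m) 0.
Proof.
  intros eps He.
  set (c0 := exp 2 - 2 * exp (/2)). assert (Hc0 : 0 < c0) by apply c0_pos.
  set (R0 := Rmax (Rmax 71 (128 * lam * lam)) (Rmax (8 - ln (eps * c0 / 5)) (exp 25)) + 1).
  assert (HR0 : 0 < R0).
  { unfold R0. generalize (Rmax_l 71 (128 * lam * lam)) (Rmax_l (Rmax 71 (128 * lam * lam)) (Rmax (8 - ln (eps * c0 / 5)) (exp 25))). lra. }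
  destruct (INR_archimed 1 (R0 * R0) ltac:(lra)) as [N HN].
  exists (max N 2). intros m Hm. unfold Rge in Hm.
  assert (Hm2 : (2 <= m)%nat) by lia.
  assert (HmN : INR N <= INR m) by (apply le_INR; lia).
  assert (Hm0 : 0 < INR m) by (apply lt_0_INR; lia).
  set (r := sqrt (INR m)).
  assert (Hrr : r * r = INR m) by (apply sqrt_sqrt; lra).
  assert (HrR0 : R0 <= r).
  { unfold r. rewrite <- (sqrt_square R0) by lra. apply sqrt_le_1_alt. lra. }
  assert (Hr1 : 71 <= r /\ 128 * lam * lam <= r /\ 8 - ln (eps * c0 / 5) < r /\ exp 25 <= r).
  { unfold R0 in HrR0.
    generalize (Rmax_l 71 (128 * lam * lam)) (Rmax_r 71 (128 * lam * lam))
      (Rmax_l (Rmax 71 (128 * lam * lam)) (Rmax (8 - ln (eps * c0 / 5)) (exp 25)))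
      (Rmax_r (Rmax 71 (128 * lam * lam)) (Rmax (8 - ln (eps * c0 / 5)) (exp 25)))
      (Rmax_l (8 - ln (eps * c0 / 5)) (exp 25)) (Rmax_r (8 - ln (eps * c0 / 5)) (exp 25)).
    lra. }
  destruct Hr1 as [Hr71 [Hrl [Hre Hr25]]].
  assert (Hr : 0 < r) by lra.
  set (L := ln r).
  assert (HL1 : 25 <= L).
  { unfold L. rewrite <- (ln_exp 25). destruct Hr25 as [h|h].
    left; apply ln_increasing; auto; apply exp_pos. rewrite h; lra. }
  assert (HL2 : L <= r).
  { unfold L. generalize (exp_ineq1_le (ln r)). rewrite exp_ln by lra. lra. }
  assert (Hlnm : ln (INR m) = 2 * L) by (rewrite <- Hrr; unfold L; rewrite ln_mult by lra; ring).
  set (q := sqrt (1 * ln (INR m) / INR m)).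
  assert (Hq0 : 0 <= q) by apply sqrt_pos.
  assert (Hqq : q * q * (r * r) = 2 * L).
  { unfold q. rewrite sqrt_sqrt. rewrite Hrr, <- Hlnm. field. lra.
    rewrite Hlnm. apply Rmult_le_pos. lra. left; apply Rinv_0_lt_compat; lra. }
  assert (Hcore := asym_core lam r q L hlam Hr71 Hrl Hq0 Hqq HL1 HL2).
  assert (Hsmall : 5 * exp (8 - r) < eps * c0).
  { replace (eps * c0) with (5 * exp (ln (eps * c0 / 5))).
    apply Rmult_lt_compat_l. lra. apply exp_increasing. lra.
    rewrite exp_ln. field. apply Rdiv_lt_0_compat. nra. lra. }
  destruct (hUP m Hm2) as [vA [vAc [HvA [HvAc Hv]]]].
  destruct (hPCM m Hm2) as [wA [wAc [HwA [HwAc Hw]]]].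
  assert (U1 := UP_A_bound lam m vA Hm2 HvA).
  assert (U2 := UP_Ac_bound lam m vAc Hm2 HvAc).
  assert (U10 := nonneg_bound _ m _ vA Hm2 HvA).
  assert (U20 := nonneg_bound _ m _ vAc Hm2 HvAc).
  assert (L1 := PCM_A_bound m wA Hm2 HwA).
  assert (L20 := nonneg_bound _ m _ wAc Hm2 HwAc).
  fold r q in U1, U2, L1.
  set (Cn := Cg ^ (m * m)) in *.
  assert (HCn : 0 < Cn) by (apply pow_lt, Cg_pos).
  set (A := r * r * (lam * q)) in *.
  set (E := exp (- (4 * r + 8) - INR m / 2)).
  assert (HE : 0 < E) by apply exp_pos.
  assert (EU1 : INR m * exp (- INR m * (1 + lam * q) + INR m * / 2)
                = E * (r * r * exp (4 * r + 8 - A))).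
  { unfold E, A. rewrite Hrr.
    replace (exp (- INR m * (1 + lam * q) + INR m * / 2)) with
      (exp (- (4 * r + 8) - INR m / 2) * exp (4 * r + 8 - INR m * (lam * q)))
      by (rewrite <- exp_plus; f_equal; field). ring. }
  assert (EU2 : exp (- INR m * (1 - lam * q) + INR m * / 4)
                = E * exp (4 * r + 8 + A - r * r / 4)).
  { unfold E, A. rewrite <- exp_plus. f_equal. rewrite Hrr. field. }
  rewrite EU1 in U1. rewrite EU2 in U2. fold E in L1. fold c0 in L1.
  assert (HP : 0 < ERPCM m).
  { rewrite Hw. assert (0 < Cn * (E * c0)) by (apply Rmult_lt_0_compat; auto; nra). nra. }
  assert (HU0 : 0 <= ERUP m) by (rewrite Hv; lra).
  unfold R_dist. rewrite Rminus_0_r. rewrite Rabs_pos_eq by (apply Rmult_le_pos; [lra | left; apply Rinv_0_lt_compat; lra]).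
  apply (Rmult_lt_reg_r (ERPCM m)). auto.
  unfold Rdiv. rewrite Rmult_assoc, Rinv_l, Rmult_1_r by lra.
  assert (ERUP m <= / 2 * (Cn * E * (r * r * exp (4 * r + 8 - A) + exp (4 * r + 8 + A - r * r / 4)))).
  { rewrite Hv. nra. }
  assert (eps * (/2 * (Cn * (E * c0))) <= eps * ERPCM m).
  { apply Rmult_le_compat_l. lra. rewrite Hw. lra. }
  assert (Cn * E * (r * r * exp (4 * r + 8 - A) + exp (4 * r + 8 + A - r * r / 4))
          < Cn * E * (eps * c0)).
  { apply Rmult_lt_compat_l. nra. lra. }
  nra.
Qed.
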